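(* Let $p$ be a positive integer, $\lambda\neq0$, $k\in\mathbb{N}$, and $f\in\mathcal{R}$ with $U_pf=\lambda f$. Then \[U_p\Big[\Big(x\frac{d}{dx}\Big)^kf\Big]=(p^k\lambda)\Big(x\frac{d}{dx}\Big)^kf.\] In other words, if $\lambda$ is an eigenvalue of $U_p$ with eigenfunction $f$, then $p^k\lambda$ is an eigenvalue of $U_p$ with eigenfunction $(x\frac{d}{dx})^kf$.
   Context: $\mathcal{R}$ denotes the real vector space of rational functions $f(x)=A(x)/B(x)$ with $A,B\in\mathbb{R}[x]$, $B(0)\neq 0$ and $\deg A<\deg B$. For $f$ with Taylor expansion $f(x)=\sum_{n\ge0}a_nx^n$ at $0$ and a positive integer $p$, $U_pf(x)=\sum_{n\ge 0}a_{pn}x^n$. *)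

(* Defs.v *)
From Stdlib Require Import Reals.
From Coquelicot Require Import Coquelicot.
From mathcomp Require Import all_boot all_algebra.
From mathcomp Require Import Rstruct.

Set Implicit Arguments.
Local Open Scope R_scope.
Unset Strict Implicit.
Unset Printing Implicit Defensive.

Definition ratfun (A B : {poly R}) : R -> R := fun x => Rdiv (horner A x) (horner B x).

(* Membership of A/B in the space \mathcal{R}: B(0) <> 0 and deg A < deg B
   (size = degree + 1, size 0 = 0, so A = 0 is allowed). *)
Definition in_calR (A B : {poly R}) : Prop :=
  horner B 0 <> 0 /\ (size A < size B)%N.

Definition taylor_coef (f : R -> R) (n : nat) : R :=
  Rdiv (Derive_n f n 0) (INR (Factorial.fact n)).

Definition theta (f : R -> R) : R -> R := fun x => Rmult x (Derive f x).

(* U_p g = mu g, expressed on the Taylor coefficients: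
   U_p g (x) = sum_n a_{pn} x^n and mu g (x) = sum_n mu a_n x^n. *)
Definition Up_eigen (p : nat) (mu : R) (g : R -> R) : Prop :=
  forall n : nat, taylor_coef g (p * n) = Rmult mu (taylor_coef g n).

(* Main.v *)
Require Import Defs.
From Stdlib Require Import Reals Lra Lia.
From Coquelicot Require Import Coquelicot.
From mathcomp Require Import all_boot all_algebra.
From mathcomp Require Import Rstruct.

Local Open Scope R_scope.
Set Implicit Arguments.

Lemma horner_derive (P : {poly R}) x : is_derive (fun t => (horner P t)) x (horner P^`() x).
Proof.
elim/poly_ind: P => [|P c IH].
  rewrite deriv0 horner0.
  apply: (is_derive_ext (fun _ => 0)); first by move=> t; rewrite horner0.
  exact: (is_derive_const 0 x).
apply: (is_derive_ext (fun t => (horner P t) * t + c)).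
  by move=> t; rewrite hornerMXaddC.
rewrite derivMXaddC hornerD hornerMX.
have H := is_derive_plus _ _ _ _ _ (is_derive_mult _ _ _ _ _ IH (is_derive_id x) Rmult_comm) (is_derive_const c x).
move: H; rewrite /plus /mult /zero /one /=.
have -> : (horner P^`() x * x + horner P x * 1 + 0) = (horner P x + horner P^`() x * x)%R.
  by rewrite -RplusE -RmultE; ring.
by [].
Qed.

Definition LocRat (f : R -> R) := exists (P Q : {poly R}) (eps : posreal),
  forall x, Rabs x < eps -> (horner Q x) <> 0 /\ f x = (horner P x) / (horner Q x).

Lemma ball_loc (eps : posreal) y : Rabs y < eps -> locally y (fun t => Rabs t < eps).
Proof.
move=> Hy.
have Hd : 0 < eps - Rabs y by lra.
exists (mkposreal _ Hd) => t Ht.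
move: Ht; rewrite /ball /= /AbsRing_ball /abs /minus /plus /opp /= => Ht.
have := Rabs_triang (t - y) y.
have -> : t - y + y = t by ring.
move=> HH. change (Rabs (t - y) < eps - Rabs y) in Ht. lra.
Qed.

Lemma field_aux (a b c d : R) : d <> 0 -> (a*d - c*b)/d^2 = (a*d + - (c*b))/(d*d).
Proof. move=> Hd; field; exact: Hd. Qed.

Lemma locrat_derive f : LocRat f ->
  (exists eps : posreal, forall x, Rabs x < eps -> ex_derive f x) /\ LocRat (Derive f).
Proof.
move=> [P [Q [eps H]]].
have D : forall y, Rabs y < eps -> is_derive f y
   ((horner P^`() y * horner Q y - horner P y * horner Q^`() y) / horner Q y ^ 2).
  move=> y Hy.
  apply: (is_derive_ext_loc (fun t => (horner P t) / (horner Q t))).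
    apply: (filter_imp (fun t => Rabs t < eps)); last exact: (ball_loc _ _ Hy).
    move=> t Ht; symmetry; exact: (proj2 (H t Ht)).
  exact: is_derive_div (horner_derive P y) (horner_derive Q y) (proj1 (H y Hy)).
split.
  by exists eps => x Hx; eexists; apply: (D x Hx).
exists (P^`() * Q - P * Q^`())%R, (Q * Q)%R, eps => x Hx.
have Qx := proj1 (H x Hx).
rewrite !(hornerD, hornerN, hornerM).
split.
  rewrite -RmultE; exact: Rmult_integral_contrapositive_currified.
rewrite (is_derive_unique _ _ _ (D x Hx)).
rewrite -!RmultE -!RoppE -!RplusE.
exact: field_aux.
Qed.

Lemma locrat_theta f : LocRat f -> LocRat (theta f).
Proof.
move/locrat_derive => [_ [P [Q [eps H]]]].
exists (P * 'X)%R, Q, eps => x Hx; have [Qx E] := H x Hx; split => //.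
rewrite /theta E hornerMX -RmultE /Rdiv; ring.
Qed.

Lemma locrat_Dn f n : LocRat f -> LocRat (Derive_n f n).
Proof.
move=> Hf; elim: n => [|n IH]; first exact: Hf.
change (LocRat (Derive (Derive_n f n))); exact: (proj2 (locrat_derive IH)).
Qed.

Lemma locrat_loc0 f : LocRat f -> locally 0 (fun x => ex_derive f x).
Proof.
move/locrat_derive=> [[eps H] _].
apply: (filter_imp (fun t => Rabs t < eps)); first by move=> t; apply: H.
apply: ball_loc; rewrite Rabs_R0; exact: cond_pos.
Qed.

Lemma locrat_exn f n : LocRat f ->
  locally 0 (fun y => forall k, (k <= n)%coq_nat -> ex_derive_n f k y).
Proof.
move=> Hf; elim: n => [|n IH].
  apply: filter_forall => y k Hk.
  have -> : k = 0%N by lia.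
  done.
have L := locrat_loc0 (locrat_Dn n Hf).
eapply filter_imp; last exact: (filter_and _ _ IH L).
move=> y [H1 H2] k Hk.
case: (Nat.eq_dec k n.+1) => [->|Hne]; first exact: H2.
apply: H1; lia.
Qed.

Lemma key f : LocRat f -> forall n, Derive_n (theta f) n 0 = INR n * Derive_n f n 0.
Proof.
move=> Hf n; elim: n f Hf => [|n IH] f Hf.
  rewrite /= /theta; ring.
have Sn : forall g, Derive_n g n.+1 0 = Derive_n (Derive g) n 0.
  by move=> g; rewrite -[n.+1]Nat.add_1_r -Derive_n_comp.
rewrite !Sn.
have Hd := locrat_derive Hf.
have loc : locally 0 (fun y => Derive (theta f) y = Derive f y + theta (Derive f) y).
  have L := locrat_loc0 (proj2 Hd).
  eapply filter_imp; last exact: L.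
  move=> y Hy.
  apply: is_derive_unique.
  have H := is_derive_mult _ _ _ _ _ (is_derive_id y) (Derive_correct _ _ Hy) Rmult_comm.
  move: H; rewrite /theta /mult /one /plus /= => H.
  suff -> : Derive f y + y * Derive (Derive f) y = 1 * Derive f y + y * Derive (Derive f) y by exact: H.
  ring.
rewrite (Derive_n_ext_loc _ _ n 0 loc).
rewrite Derive_n_plus; last first.
- exact: locrat_exn (locrat_theta (proj2 Hd)).
- exact: locrat_exn (proj2 Hd).
rewrite (IH _ (proj2 Hd)) S_INR; ring.
Qed.

Lemma iter_locrat k f : LocRat f -> LocRat (Nat.iter k theta f).
Proof.
move=> Hf; elim: k => [|k IH]; first exact: Hf.
exact: locrat_theta IH.
Qed.

Lemma iter_key k f n : LocRat f -> Derive_n (Nat.iter k theta f) n 0 = INR n ^ k * Derive_n f n 0.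
Proof.
move=> Hf; elim: k => [|k IH] /=; first ring.
rewrite key; last exact: iter_locrat.
rewrite IH; ring.
Qed.

Lemma ratfun_locrat A B : horner B 0 <> 0 -> LocRat (ratfun A B).
Proof.
move=> HB.
have C := ex_derive_continuous (fun t => horner B t) 0 (ex_intro _ _ (horner_derive B 0)).
have Hp : 0 < Rabs (horner B 0) by apply: Rabs_pos_lt.
have L := proj1 (filterlim_locally _ _) C (mkposreal _ Hp).
case: L => d Hd.
exists A, B, d => x Hx.
have Hb : ball 0 d x.
  rewrite /ball /= /AbsRing_ball /abs /minus /plus /opp /=.
  change (Rabs (x - 0) < d); rewrite Rminus_0_r; exact: Hx.
have := Hd x Hb.
rewrite /ball /= /AbsRing_ball /abs /minus /plus /opp /= => H.
change (Rabs (horner B x - horner B 0) < Rabs (horner B 0)) in H.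
split; last by [].
move=> E; rewrite E Rminus_0_l Rabs_Ropp in H; lra.
Qed.

Unset Implicit Arguments.
Theorem mainTheorem10 (p : nat) (lam : R) (k : nat) (A B : {poly R}) :
  (0 < p)%nat -> lam <> 0 -> in_calR A B ->
  Up_eigen p lam (ratfun A B) ->
  Up_eigen p (Rmult (pow (INR p) k) lam) (Nat.iter k theta (ratfun A B)).
Proof.
move=> _ _ [HB0 _] HU n.
have Hf := @ratfun_locrat A B HB0.
have E := HU n.
rewrite /taylor_coef in E *.
rewrite !iter_key //.
rewrite mult_INR Rpow_mult_distr.
transitivity (INR p ^ k * INR n ^ k * (Derive_n (ratfun A B) (p * n) 0 / INR (Factorial.fact (p * n)))).
  rewrite /Rdiv; ring.
rewrite E /Rdiv; ring.
Qed.
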